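(* Let $\Pi=(\mathsf A,\mathsf B)$ be a protocol. Then for every $\delta\in(0,\frac12]$ there exists a constant $c=c(\delta)>0$ (depending only on $\delta$) such that for every $\delta'\ge\delta$ and $\gamma>1$: $$\Pr_{\ell\leftarrow L_{(\mathsf A^{(1)}_\Pi,\mathsf B)}}\Big[\ell\in\mathrm{desc}\big(\mathrm{Unbal}_\Pi(\gamma)\setminus\overline{\mathrm{desc}}(\mathrm{Low}_\Pi(\delta',\mathsf A))\big)\Big]\le\frac{2}{\gamma^{c}}.$$
   Context: An $m$-round single-bit-message protocol $\Pi$ is identified with the complete binary tree of height $m$ (nodes are binary strings, leaves of length $m$), with control scheme, edge probabilities, output $\chi_\Pi:\text{leaves}\to\{0,1\}$, visit probabilities $v_\Pi(u)$, leaf distribution $L_\Pi$; $\Pi_u$ is the subprotocol under node $u$ and $\mathrm{val}(\Pi_u)$ its expected output (taken $0$ if $v_\Pi(u)=0$). The biased-continuation attacker $\mathsf A^{(1)}_\Pi$: at an $\mathsf A$-controlled node $u$ it samples $\ell\leftarrow L_\Pi$ conditioned on $\ell$ extending $u$ and $\chi_\Pi(\ell)=1$ (an arbitrary leaf under $u$ if impossible) and sends $\ell_{|u|+1}$. $\mathrm{Unbal}_\Pi(\gamma)=\{u\text{ non-leaf}: v_{(\mathsf A^{(1)}_\Pi,\mathsf B)}(u)\ge\gamma\cdot v_\Pi(u)\}$. $\mathrm{Low}_\Pi(\delta,\mathsf A)=\{u\text{ non-leaf, controlled by }\mathsf A:\mathrm{val}(\Pi_u)\le\delta\}$. $\mathrm{desc}(\mathcal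 S)$ is the set of nodes with an ancestor (possibly itself) in $\mathcal S$; $\overline{\mathrm{desc}}(\mathcal S)=\bigcup_{u\in\mathcal S}(\text{descendants of }u\text{ other than }u)$. *)

(* Defs.v *)
From HB Require Import structures.
From mathcomp Require Import all_boot all_order all_algebra.
From mathcomp Require Import all_classical all_reals all_analysis.
Set Implicit Arguments. Unset Strict Implicit. Unset Printing Implicit Defensive.
Import Order.TTheory GRing.Theory Num.Theory.
Local Open Scope ring_scope.

(* An m-round single-bit-message protocol: nodes are binary strings (seq bool)
   of length <= m; leaves are those of length m.
   - ctrlA u   : node u is controlled by A (otherwise by B)
   - eprob u   : probability that the message sent at node u is 1
                 (i.e. that the edge u -> rcons u true is taken)
   - out l     : the output chi_Pi(l) on leaves l. *)
Record protocol (R : realType) := Protocol {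
  ctrlA : seq bool -> bool;
  eprob : seq bool -> R;
  out   : seq bool -> bool }.

Section Defs.
Variables (R : realType) (m : nat).

Definition wf_protocol (P : protocol R) : Prop :=
  forall u : seq bool, (size u < m)%N -> 0 <= eprob P u <= 1.

Definition edge (e : seq bool -> R) (u : seq bool) (b : bool) : R :=
  if b then e u else 1 - e u.

Definition visit (e : seq bool -> R) (u : seq bool) : R :=
  \prod_(i < size u) edge e (take i u) (nth false u i).

Fixpoint valsub_aux (P : protocol R) (k : nat) (u : seq bool) : R :=
  match k with
  | O => (out P u)%:R
  | k'.+1 => eprob P u * valsub_aux P k' (rcons u true)
             + (1 - eprob P u) * valsub_aux P k' (rcons u false)
  end.

Definition val (P : protocol R) (u : seq bool) : R :=
  if visit (eprob P) u == 0 then 0 else valsub_aux P (m - size u) u.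

(* At an A-controlled node u the
   biased-continuation attacker sends 1 with probability
   Pr_{l<-L_Pi}[l extends rcons u true, chi l = 1] / Pr[l extends u, chi l = 1]
   = eprob u * val(rcons u true) / val u when this conditioning is possible
   (val u > 0); otherwise it sends the next bit of an arbitrary leaf under u,
   modelled by an arbitrary fallback probability q u of sending 1. *)
Definition att_eprob (P : protocol R) (q : seq bool -> R) (u : seq bool) : R :=
  if ctrlA P u then
    (if 0 < val P u then eprob P u * val P (rcons u true) / val P u else q u)
  else eprob P u.

Definition Unbal (P : protocol R) (q : seq bool -> R) (gamma : R)
    (u : seq bool) : bool :=
  (size u < m)%N && (gamma * visit (eprob P) u <= visit (att_eprob P q) u).

Definition LowA (P : protocol R) (delta : R) (u : seq bool) : bool :=
  [&& (size u < m)%N, ctrlA P u & val P u <= delta].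

Definition in_desc (S : pred (seq bool)) (u : seq bool) : bool :=
  has (fun k => S (take k u)) (iota 0 (size u).+1).

Definition in_sdesc (S : pred (seq bool)) (u : seq bool) : bool :=
  has (fun k => S (take k u)) (iota 0 (size u)).

Definition attack_event_prob (P : protocol R) (q : seq bool -> R)
    (gamma delta' : R) : R :=
  \sum_(l : m.-tuple bool)
    visit (att_eprob P q) l *
    (in_desc (fun u => Unbal P q gamma u && ~~ in_sdesc (LowA P delta') u)
             l)%:R.

End Defs.

(* Main.v *)
Require Import Defs.
From HB Require Import structures.
From mathcomp Require Import all_boot all_order all_algebra.
From mathcomp Require Import all_classical all_reals all_analysis.
From mathcomp Require Import ring lra.
Import Order.TTheory GRing.Theory Num.Theory.
Local Open Scope ring_scope.


Lemma bern (R : realType) (r c : R) : 0 <= r -> 0 < c < 1 -> r `^ c <= 1 + c * (r - 1).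
Proof.
move=> r0 /andP[c0 c1].
have c1' : 0 < 1 - c by rewrite subr_gt0.
have ci : 0 < c^-1 by rewrite invr_gt0.
have ci' : 0 < (1 - c)^-1 by rewrite invr_gt0.
have := conjugate_powR (powR_ge0 r c) ler01 ci ci'.
rewrite !invrK subrKC => /(_ erefl).
rewrite -powRrM mulfV ?gt_eqF // powRr1 // powR1 mulr1.
move=> H; apply: (le_trans H); rewrite mul1r mulrC mulrBr mulr1 addrC; lra.
Qed.

Lemma take_rcons_le (T : Type) (u : seq T) b k : (k <= size u)%N -> take k (rcons u b) = take k u.
Proof. by move=> h; rewrite -cats1 takel_cat. Qed.

Lemma visit_rcons (R : realType) (e : seq bool -> R) u b :
  visit e (rcons u b) = visit e u * edge e u b.
Proof.
rewrite /visit size_rcons big_ord_recr /=; congr (_ * _).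
  apply: eq_bigr => i _; rewrite take_rcons_le ?(ltnW (ltn_ord i)) //.
  by rewrite nth_rcons (ltn_ord i).
by rewrite take_rcons_le // take_size nth_rcons ltnn eqxx.
Qed.

Lemma visit_nil (R : realType) (e : seq bool -> R) : visit e [::] = 1.
Proof. by rewrite /visit big_ord0. Qed.

Lemma in_sdesc_rcons (S : pred (seq bool)) u b :
  in_sdesc S (rcons u b) = in_sdesc S u || S u.
Proof.
rewrite /in_sdesc size_rcons -addn1 iotaD has_cat /= add0n orbF take_rcons_le //.
rewrite take_size; congr (_ || _); apply: eq_in_has => k; rewrite mem_iota => /andP[_ h].
by rewrite take_rcons_le // ltnW.
Qed.

Lemma tuple_sum_split (R : realType) n (F : seq bool -> R) :
  \sum_(t : n.+1.-tuple bool) F t = \sum_(b : bool) \sum_(t : n.-tuple bool) F (b :: t).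
Proof.
rewrite pair_big /=.
rewrite (reindex (fun p : bool * n.-tuple bool => [tuple of p.1 :: p.2])) /=; first by [].
exists (fun t : n.+1.-tuple bool => (thead t, [tuple of behead t])) => [[b t] _|t _] /=.
  by congr (_, _); apply: val_inj.
by apply: val_inj => /=; case: t => -[|x s] //=.
Qed.


Lemma poly_ineq (R : realType) (e v1 v0 v c : R) :
  0 <= e <= 1 -> 0 <= v1 <= 1 -> 0 <= v0 <= 1 -> v = e * v1 + (1 - e) * v0 ->
  0 < v -> 0 < c -> 2 * c <= v ->
  e * (v1 / v) * (1 + c * (v1 / v - 1)) * (2 - v1) +
  (1 - e) * (v0 / v) * (1 + c * (v0 / v - 1)) * (2 - v0) <= 2 - v.
Proof.
move=> /andP[e0 e1] /andP[a0 a1] /andP[b0 b1] hv v0' c0 cv.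
set r1 := v1 / v; set r0 := v0 / v.
have E1 : v1 = r1 * v by rewrite /r1 mulfVK ?gt_eqF.
have E0 : v0 = r0 * v by rewrite /r0 mulfVK ?gt_eqF.
have r10 : 0 <= r1 by rewrite /r1 divr_ge0 // ltW.
have r00 : 0 <= r0 by rewrite /r0 divr_ge0 // ltW.
clearbody r1 r0.
have hs : e * r1 + (1 - e) * r0 = 1.
  have vn : v != 0 by rewrite gt_eqF.
  apply: (mulIf vn); rewrite mul1r {2}hv E1 E0; ring.
rewrite E1 E0.
set S2 := e * (r1 - 1) ^+ 2 + (1 - e) * (r0 - 1) ^+ 2.
set S3 := e * r1 * (r1 - 1) ^+ 2 + (1 - e) * r0 * (r0 - 1) ^+ 2.
have -> : e * r1 * (1 + c * (r1 - 1)) * (2 - r1 * v) +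
  (1 - e) * r0 * (1 + c * (r0 - 1)) * (2 - r0 * v) =
  (2 - v) * (e * r1 + (1 - e) * r0) + ((1 + c) * (2 - v) - v) * (e * r1 + (1 - e) * r0 - 1)
  + (2 * c - c * v - v) * S2 - c * v * S3 - (2 - v) * (e * r1 + (1 - e) * r0 - 1).
  rewrite /S2 /S3; ring.
rewrite hs subrr !mulr0 mulr1 addr0 subr0.
have S20 : 0 <= S2 by rewrite /S2 addr_ge0 // mulr_ge0 ?sqr_ge0 ?subr_ge0.
have S30 : 0 <= S3 by rewrite /S3 addr_ge0 // mulr_ge0 ?sqr_ge0 ?mulr_ge0 ?subr_ge0.
have K1 : 2 * c - c * v - v <= 0 by nra.
have : (2 * c - c * v - v) * S2 <= 0 by rewrite mulr_le0_ge0.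
have : 0 <= c * v * S3 by rewrite !mulr_ge0 // ltW.
lra.
Qed.

Lemma childB (R : realType) (c W V eb r y G : R) : 0 <= W -> 0 < V -> 0 <= eb -> 0 <= r ->
  (W * (eb * r)) * ((W * (eb * r)) / (V * eb)) `^ c * y / G =
  W * (W / V) `^ c / G * (eb * r * r `^ c * y).
Proof.
move=> W0 V0 eb0 r0; have [->|ebn] := eqVneq eb 0; first by rewrite !(mul0r, mulr0).
have -> : W * (eb * r) / (V * eb) = (W / V) * r by field; rewrite ebn gt_eqF.
rewrite powRM ?divr_ge0 // ?ltW //; ring.
Qed.

Set Implicit Arguments.



Section Main.
Variables (R : realType) (m : nat) (P : protocol R) (q : seq bool -> R) (delta' gamma c : R).
Hypothesis wf : wf_protocol m P.
Hypothesis hq : forall u, 0 <= q u <= 1.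

Local Notation V := (visit (eprob P)).
Local Notation W := (visit (att_eprob m P q)).
Local Notation L := (LowA m P delta').
Definition EE u := Unbal m P q gamma u && ~~ in_sdesc L u.

Fixpoint Tr n u : R := match n with
  | O => W u * (EE u)%:R
  | n'.+1 => if EE u then W u else Tr n' (rcons u true) + Tr n' (rcons u false)
  end.

Lemma sum_tuple0 (F : seq bool -> R) : \sum_(t : 0.-tuple bool) F t = F [::].
Proof.
rewrite (big_pred1 [tuple]) // => t /=; apply/esym/eqP; exact: tuple0.
Qed.

Lemma sumW n u : \sum_(t : n.-tuple bool) W (u ++ t) = W u.
Proof.
elim: n u => [|n IH] u; first by rewrite (sum_tuple0 (fun s => W (u ++ s))) cats0.
rewrite (tuple_sum_split _ _ (fun s => W (u ++ s))) big_bool /=.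
under eq_bigr => t _ do rewrite -cat_rcons.
under [X in _ + X]eq_bigr => t _ do rewrite -cat_rcons.
rewrite !IH !visit_rcons /edge -mulrDr; ring.
Qed.

Lemma sumT n u : \sum_(t : n.-tuple bool) W (u ++ t) *
   (has (fun j => EE (take j (u ++ t))) (iota (size u) n.+1))%:R = Tr n u.
Proof.
elim: n u => [|n IH] u.
  rewrite (sum_tuple0 (fun s => W (u ++ s) * (has (fun j => EE (take j (u ++ s))) (iota (size u) 1))%:R)) cats0.
  by rewrite (_ : iota (size u) 1 = [:: size u]) // has_seq1 take_size.
rewrite (tuple_sum_split _ _ (fun s => W (u ++ s) * (has (fun j => EE (take j (u ++ s))) (iota (size u) n.+2))%:R)).
have step : forall b (t : n.-tuple bool),
  W (u ++ b :: t) * (has (fun j => EE (take j (u ++ b :: t))) (iota (size u) n.+2))%:R =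
  if EE u then W (rcons u b ++ t) else W (rcons u b ++ t) *
     (has (fun j => EE (take j (rcons u b ++ t))) (iota (size (rcons u b)) n.+1))%:R.
  move=> b t; rewrite (_ : iota (size u) n.+2 = [:: size u] ++ iota (size u).+1 n.+1); last by [].
  rewrite has_cat has_seq1 take_size_cat; last by [].
  rewrite -cat_rcons size_rcons; case: (EE u); last by [].
  by rewrite mulr1.
under eq_bigr => b _ do under eq_bigr => t _ do rewrite step.
rewrite [Tr n.+1 u]/=.
case: (EE u).
  rewrite -(sumW n.+1 u) (tuple_sum_split _ _ (fun s => W (u ++ s))).
  by apply: eq_bigr => b _; apply: eq_bigr => t _; rewrite cat_rcons.
by rewrite big_bool -!IH.
Qed.

Lemma sdescL_rcons u b : in_sdesc L (rcons u b) = in_sdesc L u || L u.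
Proof. exact: in_sdesc_rcons. Qed.

Lemma Tr_low n u : in_sdesc L u -> Tr n u = 0.
Proof.
elim: n u => [|n IH] u h /=; first by rewrite /EE h andbF mulr0.
by rewrite /EE h andbF !IH ?addr0 // in_sdesc_rcons h.
Qed.

Lemma attack_Tr : attack_event_prob m P q gamma delta' = Tr m [::].
Proof.
rewrite -sumT; apply: eq_bigr => t _ /=.
by rewrite /in_desc size_tuple.
Qed.


Lemma valsub01 k u : (size u + k <= m)%N || (k == 0)%N -> 0 <= valsub_aux P k u <= 1.
Proof.
elim: k u => [|k IH] u h.
  by rewrite [valsub_aux _ _ _]/=; case: (out P u); apply/andP; split; rewrite /= ?mulr1n ?mulr0n ?lexx ?ler01.
have hs : (size u < m)%N by move: h; rewrite orbF addnS; apply: leq_trans; rewrite ltnS leq_addr.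
have /andP[e0 e1] := wf _ hs.
have /andP[a0 a1] : 0 <= valsub_aux P k (rcons u true) <= 1.
  by apply: IH; rewrite size_rcons addSnnS; move: h; rewrite orbF => ->.
have /andP[b0 b1] : 0 <= valsub_aux P k (rcons u false) <= 1.
  by apply: IH; rewrite size_rcons addSnnS; move: h; rewrite orbF => ->.
rewrite [valsub_aux _ _ _]/=; apply/andP; split; nra.
Qed.

Lemma val01 u : 0 <= Defs.val m P u <= 1.
Proof.
rewrite /Defs.val; case: eqP => _; first by rewrite lexx ler01.
apply: valsub01; case: (leqP (size u) m) => h; first by rewrite subnKC // leqnn.
by apply/orP; right; rewrite subn_eq0 ltnW.
Qed.

Lemma val_rec u : (size u < m)%N -> V u != 0 ->
  Defs.val m P u = eprob P u * Defs.val m P (rcons u true) + (1 - eprob P u) * Defs.val m P (rcons u false).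
Proof.
move=> hs hV; rewrite {1}/Defs.val (negbTE hV) -(subnSK hs).
have hb : forall b, edge (eprob P) u b * Defs.val m P (rcons u b) =
    edge (eprob P) u b * valsub_aux P (m - (size u).+1) (rcons u b).
  move=> b; rewrite /Defs.val visit_rcons size_rcons; case: eqP => [/eqP|_]; last by [].
  by rewrite mulf_eq0 (negbTE hV) /= => /eqP ->; rewrite !mul0r.
have := hb true; have := hb false; rewrite /edge => -> ->; by [].
Qed.

Lemma att01 u : (size u < m)%N -> 0 <= att_eprob m P q u <= 1.
Proof.
move=> hs; rewrite /att_eprob; case: (ctrlA P u); last exact: wf.
case: ifP => hv; last exact: hq.
have hV : V u != 0.
  by apply: contraTneq hv => h; rewrite /Defs.val h eqxx ltxx.
have hr := @val_rec u hs hV.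
have /andP[a0 a1] := val01 (rcons u true).
have /andP[b0 b1] := val01 (rcons u false).
have /andP[e0 e1] := wf _ hs.
apply/andP; split; first by rewrite divr_ge0 ?mulr_ge0 // ltW.
rewrite ler_pdivrMr // mul1r hr; nra.
Qed.

Lemma W_ge0 u : (size u <= m)%N -> 0 <= W u.
Proof.
move=> h; rewrite /visit; apply: prodr_ge0 => i _.
have hi : (size (take i u) < m)%N.
  by rewrite size_take (ltn_ord i); apply: leq_trans (ltn_ord i) h.
have /andP[] := @att01 _ hi; rewrite /edge; case: (nth _ _ _) => ? ?; lra.
Qed.

Hypothesis hg : 1 < gamma.
Hypothesis hc : 0 < c < 1.
Hypothesis hcd : 2 * c <= delta'.

Definition Bd u := W u * (W u / V u) `^ c * (2 - Defs.val m P u) / gamma `^ c.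

Lemma Bd_ge0 u : (size u <= m)%N -> 0 <= Bd u.
Proof.
move=> h; have /andP[v0 v1] := val01 u.
rewrite /Bd divr_ge0 ?powR_ge0 // mulr_ge0 ?mulr_ge0 ?(@W_ge0 u) ?powR_ge0 //; lra.
Qed.


Lemma V_rcons_gt0 u b : 0 < V u -> edge (eprob P) u b != 0 -> (size u < m)%N -> 0 < V (rcons u b).
Proof.
move=> hV hb hs; rewrite visit_rcons mulr_gt0 // lt_def hb /=.
have /andP[e0 e1] := wf _ hs; by case: b hb; rewrite /edge ?subr_ge0.
Qed.

Lemma step u : (size u < m)%N -> ~~ L u -> (W u != 0 -> 0 < V u) ->
  (forall b, W (rcons u b) != 0 -> 0 < V (rcons u b)) /\ (Bd (rcons u true) + Bd (rcons u false) <= Bd u).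
Proof.
move=> hs hL hWV.
have [W0|Wn] := eqVneq (W u) 0.
  split; first by move=> b; rewrite visit_rcons W0 mul0r eqxx.
  by rewrite /Bd !visit_rcons W0 !mul0r addr0.
have hV := hWV Wn.
have hW : 0 < W u by rewrite lt_def Wn (@W_ge0 u) // ltnW.
have hr := @val_rec u hs (lt0r_neq0 hV).
have /andP[a0 a1] := val01 (rcons u true).
have /andP[b0 b1] := val01 (rcons u false).
have /andP[vv0 vv1] := val01 u.
have /andP[e0 e1] := wf _ hs.
set e := eprob P u in hr e0 e1 *.
set v := Defs.val m P u in hr vv0 vv1 *.
set v1 := Defs.val m P (rcons u true) in hr a0 a1 *.
set v0 := Defs.val m P (rcons u false) in hr b0 b1 *.
set K := W u * (W u / V u) `^ c / gamma `^ c.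
have hg0 : 0 < gamma := lt_trans ltr01 hg.
have K0 : 0 <= K by rewrite /K divr_ge0 ?powR_ge0 // mulr_ge0 ?powR_ge0 // ltW.
have hBu : Bd u = K * (2 - v).
  by rewrite /v mulrAC.
have hB : forall b eb r, 0 <= eb -> 0 <= r -> edge (att_eprob m P q) u b = eb * r ->
    edge (eprob P) u b = eb ->
    Bd (rcons u b) = K * (eb * r * r `^ c * (2 - Defs.val m P (rcons u b))).
  move=> b eb r eb0 r0 ha he.
  by rewrite /Bd !visit_rcons ha he childB // ltW.
have hpos : forall b eb r, edge (att_eprob m P q) u b = eb * r ->
    edge (eprob P) u b = eb -> W (rcons u b) != 0 -> 0 < V (rcons u b).
  move=> b eb r ha he; rewrite visit_rcons ha mulf_eq0 negb_or mulf_eq0 negb_or.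
  case/andP=> _ /andP[hb _]; apply: V_rcons_gt0 => //; by rewrite he.
case hA: (ctrlA P u).
- have hvd : delta' < v by move: hL; rewrite /LowA hs hA /= -ltNge.
  have hv : 0 < v.
    have /andP[c0 _] := hc; apply: lt_trans hvd; apply: lt_le_trans hcd; by rewrite mulr_gt0.
  have vn : v != 0 by rewrite gt_eqF.
  have hatt : att_eprob m P q u = e * (v1 / v) by rewrite /att_eprob hA hv mulrA.
  have ha1 : edge (att_eprob m P q) u true = e * (v1 / v) by rewrite /edge hatt.
  have ha0 : edge (att_eprob m P q) u false = (1 - e) * (v0 / v).
    rewrite /edge hatt [RHS]mulrA (_ : (1 - e) * v0 = v - e * v1); last by rewrite hr; ring.
    by rewrite mulrBl divff // mulrA.
  have he1 : edge (eprob P) u true = e by [].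
  have he0 : edge (eprob P) u false = 1 - e by [].
  have r10 : 0 <= v1 / v by rewrite divr_ge0 // ltW.
  have r00 : 0 <= v0 / v by rewrite divr_ge0 // ltW.
  split.
    by case=> [|]; [apply: hpos ha1 he1 | apply: hpos ha0 he0].
  rewrite (hB true e (v1 / v)) // (hB false (1 - e) (v0 / v)) //; last by rewrite subr_ge0.
  rewrite hBu -mulrDr -/v1 -/v0; apply: ler_wpM2l => //.
  have t1 : 0 <= 2 - v1 by rewrite subr_ge0 (le_trans a1) // ler1n.
  have t0 : 0 <= 2 - v0 by rewrite subr_ge0 (le_trans b1) // ler1n.
  have /andP[c0 c1] := hc.
  have hcv : 2 * c <= v by apply: le_trans hcd (ltW hvd).
  have hpi : e * (v1 / v) * (1 + c * (v1 / v - 1)) * (2 - v1) +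
      (1 - e) * (v0 / v) * (1 + c * (v0 / v - 1)) * (2 - v0) <= 2 - v.
    by apply: poly_ineq; rewrite ?e0 ?e1 ?a0 ?a1 ?b0 ?b1.
  apply: (le_trans _ hpi); apply: lerD.
    apply: ler_wpM2r; first by [].
    apply: ler_wpM2l; first by rewrite mulr_ge0.
    by apply: bern => //; rewrite c0 c1.
  apply: ler_wpM2r; first by [].
  apply: ler_wpM2l; first by rewrite mulr_ge0 // subr_ge0.
  by apply: bern => //; rewrite c0 c1.
- have hatt : att_eprob m P q u = e by rewrite /att_eprob hA.
  have ha1 : edge (att_eprob m P q) u true = e * 1 by rewrite /edge hatt mulr1.
  have ha0 : edge (att_eprob m P q) u false = (1 - e) * 1 by rewrite /edge hatt mulr1.
  have he1 : edge (eprob P) u true = e by [].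
  have he0 : edge (eprob P) u false = 1 - e by [].
  split.
    by case=> [|]; [apply: hpos ha1 he1 | apply: hpos ha0 he0].
  rewrite (hB true e 1) // (hB false (1 - e) 1) //; last by rewrite subr_ge0.
  have p1 : 1 `^ c = 1 by rewrite powR1.
  rewrite hBu -/v1 -/v0 p1 hr le_eqVlt; apply/orP; left; apply/eqP; ring.
Qed.

Lemma main n u : (size u + n = m)%N -> ~~ in_sdesc L u -> (W u != 0 -> 0 < V u) ->
  Tr n u <= Bd u.
Proof.
elim: n u => [|n IH] u hs hL hWV.
  rewrite addn0 in hs.
  rewrite [Tr 0 u]/= /EE /Unbal hs ltnn /= mulr0; apply: Bd_ge0; by rewrite hs.
have hs' : (size u < m)%N by rewrite -hs addnS ltnS leq_addr.
rewrite [Tr _ u]/=; case hE: (EE u).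
  move: hE; rewrite /EE /Unbal hs' /= => /andP[hU _].
  have [W0|Wn] := eqVneq (W u) 0.
    by rewrite W0; apply: Bd_ge0; rewrite ltnW.
  have hV := hWV Wn.
  have hg0 : 0 < gamma := lt_trans ltr01 hg.
  have hx : gamma <= W u / V u by rewrite ler_pdivlMr.
  have /andP[c0 _] := hc.
  have hxc : gamma `^ c <= (W u / V u) `^ c.
    have hx0 : 0 <= W u / V u by apply: le_trans (ltW hg0) hx.
    apply: ge0_ler_powR; [exact: ltW c0 | by rewrite nnegrE ltW | by rewrite nnegrE | exact: hx].
  have h1 : 1 <= (W u / V u) `^ c / gamma `^ c by rewrite ler_pdivlMr ?powR_gt0 // mul1r.
  have /andP[v0 v1] := val01 u.
  have hW0 : 0 <= W u by rewrite (@W_ge0 u) // ltnW.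
  have -> : Bd u = W u * ((W u / V u) `^ c / gamma `^ c) * (2 - Defs.val m P u).
    by rewrite /Bd; ring.
  have h2 : 1 <= 2 - Defs.val m P u by lra.
  set a := (W u / V u) `^ c / gamma `^ c in h1 *.
  rewrite -mulrA; apply: ler_peMr => //.
  apply: (le_trans h1); apply: ler_peMr => //; exact: le_trans ler01 h1.
case hLu: (L u).
  rewrite !Tr_low ?addr0; [apply: Bd_ge0; exact: ltnW | by rewrite sdescL_rcons hLu orbT | by rewrite sdescL_rcons hLu orbT].
have hLn : ~~ L u by rewrite hLu.
have [hpos hst] := @step u hs' hLn hWV.
apply: le_trans hst; apply: lerD; apply: IH => //;
  rewrite ?size_rcons ?addSnnS ?sdescL_rcons ?negb_or ?hL ?hLn //; exact: hpos.
Qed.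

Lemma final : attack_event_prob m P q gamma delta' <= 2 / gamma `^ c.
Proof.
rewrite attack_Tr.
have hm := @main m [::] (add0n m) isT.
have hpos : W [::] != 0 -> 0 < V [::] by move=> _; rewrite visit_nil ltr01.
apply: le_trans (hm hpos) _.
have p1 : 1 `^ c = 1 by rewrite powR1.
rewrite /Bd !visit_nil divr1 mul1r p1 mul1r.
have /andP[v0 v1] := val01 [::].
have hg0 : 0 < gamma := lt_trans ltr01 hg.
apply: ler_wpM2r; first by rewrite invr_ge0 powR_ge0.
lra.
Qed.

End Main.



Theorem lemma4p7 (R : realType) (delta : R) :
  0 < delta <= 2^-1 ->
  exists c : R, 0 < c /\ 
    forall (m : nat) (P : protocol R) (q : seq bool -> R) (delta' gamma : R),
      wf_protocol m P ->
      (forall u : seq bool, 0 <= q u <= 1) ->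
      delta <= delta' -> 1 < gamma ->
      attack_event_prob m P q gamma delta' <= 2 / (gamma `^ c).
Proof.
move=> /andP[d0 d1]; exists (delta / 2); split; first by rewrite divr_gt0.
move=> m P q delta' gamma wf hq hdd hg.
have hc : 0 < delta / 2 < 1 by apply/andP; split; lra.
have hcd : 2 * (delta / 2) <= delta' by lra.
exact: final wf hq hg hc hcd.
Qed.
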